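(* Let $n_1,n_2,n_3\ge2$, $r\ge1$, $b>0$, $\beta\ge3$ and $\vartheta=2^{\lceil\beta\log_2(n_1\vee n_2)\rceil}$. Let $\mathcal{A}^*\in\mathbb{R}_+^{n_1\times r\times n_3}$ with $0\le\mathcal{A}^*_{ijk}\le1$, $\mathcal{B}^*\in\mathbb{R}_+^{r\times n_2\times n_3}$ with $0\le\mathcal{B}^*_{ijk}\le b$, and $\mathcal{X}^*=\mathcal{A}^*\diamond\mathcal{B}^*$. Let $\widetilde{\mathcal{A}}^*\in\mathfrak{L}$ be obtained by replacing each entry of $\mathcal{A}^*$ by its closest discretization level, and $\widetilde{\mathcal{B}}^*\in\mathfrak{D}$ be obtained by replacing each nonzero entry of $\mathcal{B}^*$ by its closest discretization level in $[0,b]$ and keeping zero entries zero. Then $\widetilde{\mathcal{X}}^*=\widetilde{\mathcal{A}}^*\diamond\widetilde{\mathcal{B}}^*$ satisfies \[ \|\widetilde{\mathcal{X}}^*-\mathcal{X}^*\|_\infty\le\frac{3rn_3b}{\vartheta}. \]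
   Context: Tensor-tensor product $\diamond$: for $\mathcal{X}\in\mathbb{R}^{n_1\times n_2\times n_3}$ with frontal slices $\mathbf{X}^{(1)},\dots,\mathbf{X}^{(n_3)}$ and $\mathcal{Y}\in\mathbb{R}^{n_2\times n_4\times n_3}$, $\mathcal{X}\diamond\mathcal{Y}$ is obtained by multiplying the block-circulant matrix with $(p,q)$ block $\mathbf{X}^{((p-q)\bmod n_3+1)}$ by the vertical stack of the frontal slices of $\mathcal{Y}$ and folding back. $\|\mathcal{X}\|_\infty=\max_{i,j,k}|\mathcal{X}_{ijk}|$; $m\vee n=\max\{m,n\}$. $\mathfrak{L}$ is the set of tensors in $\mathbb{R}_+^{n_1\times r\times n_3}$ whose entries each equal one of the $\vartheta$ uniformly spaced levels $\{0,\frac{1}{\vartheta-1},\dots,1\}$ of $[0,1]$; $\mathfrak{D}$ is the set of tensors in $\mathbb{R}_+^{r\times n_2\times n_3}$ whose entries are each either $0$ or one of the $\vartheta$ uniformly spaced levels $\{0,\frac{b}{\vartheta-1},\dots,b\}$ of $[0,b]$. *)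

(* Defs.v *)
From HB Require Import structures.
From mathcomp Require Import all_boot all_order all_algebra.
From mathcomp Require Import all_classical all_reals all_analysis.
Set Implicit Arguments. Unset Strict Implicit. Unset Printing Implicit Defensive.
Import Order.TTheory GRing.Theory Num.Theory.
Local Open Scope ring_scope.

Definition tensor (R : realType) (n1 n2 n3 : nat) := 'I_n1 -> 'I_n2 -> 'I_n3 -> R.

(* (k - q) mod n, as an element of 'I_n *)
Definition subord (n : nat) (k q : 'I_n) : 'I_n :=
  Ordinal (ltn_pmod (k + n - q)%N (leq_ltn_trans (leq0n q) (ltn_ord q))).

(* t-product: frontal slice k of X <> Y is sum_q X^((k-q) mod n3) Y^(q),
   i.e. block-circulant matrix of X times the stacked slices of Y. *)
Definition tprod (R : realType) (n1 n2 n3 n4 : nat)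
  (X : tensor R n1 n2 n3) (Y : tensor R n2 n4 n3) : tensor R n1 n4 n3 :=
  fun i j k => \sum_(q < n3) \sum_(l < n2) X i l (subord k q) * Y l j q.

Definition tsub (R : realType) (n1 n2 n3 : nat) (X Y : tensor R n1 n2 n3)
  : tensor R n1 n2 n3 := fun i j k => X i j k - Y i j k.

Definition tnorm_inf (R : realType) (n1 n2 n3 : nat) (X : tensor R n1 n2 n3) : R :=
  \big[Num.max/0]_(i < n1) \big[Num.max/0]_(j < n2) \big[Num.max/0]_(k < n3) `|X i j k|.

Definition vartheta (R : realType) (n1 n2 : nat) (beta : R) : nat :=
  (2 ^ `|Num.ceil (beta * (ln ((maxn n1 n2)%:R : R) / ln 2))|)%N.

Definition is_level (R : realType) (th : nat) (c : R) (x : R) : Prop :=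
  exists t : nat, (t < th)%N /\ x = c * (t%:R / (th.-1)%:R).

(* y is a closest level (of [0,c], th levels) to x; ties broken arbitrarily *)
Definition closest_level (R : realType) (th : nat) (c : R) (x y : R) : Prop :=
  is_level th c y /\ forall z, is_level th c z -> `|y - x| <= `|z - x|.

(* Main.v *)
Require Import Defs.
From HB Require Import structures.
From mathcomp Require Import all_boot all_order all_algebra.
From mathcomp Require Import all_classical all_reals all_analysis.
From mathcomp Require Import ring lra.
Import Order.TTheory GRing.Theory Num.Theory.
Local Open Scope ring_scope.

Lemma th_ge (R : realType) (n1 n2 : nat) (beta : R) :
  (2 <= n1)%N -> 3 <= beta -> (4 <= vartheta n1 n2 beta)%N.
Proof.
move=> h1 hb; rewrite /vartheta.
set m := maxn n1 n2.
have hm : (2 <= m)%N by rewrite leq_max h1.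
have l2 : 0 < ln (2:R) by apply: ln_gt0; lra.
have lm : ln (2:R) <= ln (m%:R : R).
  by rewrite ler_ln ?posrE ?ler_nat // (ltr0n R m) (leq_trans _ hm).
have q : 1 <= ln (m%:R : R) / ln 2 by rewrite ler_pdivlMr // mul1r.
have h3 : 3 <= beta * (ln (m%:R : R) / ln 2) by nra.
set k := Num.ceil _.
have hk : ((3:int)%:~R <= k%:~R :> R) by apply: le_trans (ceil_ge _); rewrite /=; lra.
rewrite ler_int in hk.
case: k hk => [n|n] hn; last by [].
have hn' : (3 <= n)%N by [].
apply: (@leq_trans (2 ^ 2)) => //=.
by rewrite leq_pexp2l // (leq_trans _ hn').
Qed.

Lemma level_bounds (R : realType) th (c z : R) :
  (2 <= th)%N -> 0 <= c -> is_level th c z -> 0 <= z <= c.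
Proof.
move=> hth hc [t [ht ->]].
have hN : (0 < th.-1)%N by rewrite -ltnS prednK // (leq_trans _ hth).
have hNR : 0 < (th.-1)%:R :> R by rewrite ltr0n.
have htN : (t <= th.-1)%N by rewrite -ltnS prednK // (leq_trans _ hth).
apply/andP; split; first by rewrite mulr_ge0 // divr_ge0.
rewrite -[leRHS]mulr1 ler_wpM2l //.
by rewrite ler_pdivrMr // mul1r ler_nat.
Qed.

Lemma near_level (R : realType) th (c x : R) :
  (2 <= th)%N -> 0 < c -> 0 <= x <= c ->
  exists z, is_level th c z /\ `|z - x| <= c / (th.-1)%:R.
Proof.
move=> hth hc /andP[hx0 hxc].
set N := th.-1.
have hN : (0 < N)%N by rewrite /N -ltnS prednK // (leq_trans _ hth).
have hNR : 0 < N%:R :> R by rewrite ltr0n.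
set h := c / N%:R.
have hh : 0 < h by rewrite divr_gt0.
set y := x / h.
have hy0 : 0 <= y by rewrite divr_ge0 // ltW.
have hyN : y <= N%:R by rewrite /y ler_pdivrMr // /h mulrCA divff ?mulr1 // gt_eqF.
set t := Num.truncn y.
have /andP[ty1 ty2] := truncn_itv hy0.
have htN : (t <= N)%N by rewrite truncn_le_nat; apply: (le_lt_trans hyN); rewrite ltr_nat.
exists (c * (t%:R / N%:R)); split.
  exists t; split => //; rewrite (leq_ltn_trans htN) // /N prednK //.
  exact: leq_trans hth.
have -> : c * (t%:R / N%:R) = t%:R * h by rewrite /h mulrCA.
have -> : x = y * h by rewrite /y divfK // gt_eqF.
rewrite -mulrBl normrM (gtr0_norm hh) -[leRHS]mul1r ler_wpM2r ?(ltW hh) //.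
rewrite -natr1 in ty2.
rewrite ler_norml; apply/andP; split; lra.
Qed.

Lemma closest_bound (R : realType) th (c x y : R) :
  (2 <= th)%N -> 0 < c -> 0 <= x <= c -> closest_level th c x y ->
  `|y - x| <= c / (th.-1)%:R.
Proof.
move=> hth hc hx [_ hcl].
have [z [hz hzx]] := @near_level R th c x hth hc hx.
exact: le_trans (hcl z hz) hzx.
Qed.

Theorem lemma2 (R : realType) (n1 n2 n3 r : nat) (b beta : R)
  (A At : tensor R n1 r n3) (B Bt : tensor R r n2 n3) :
  (2 <= n1)%N -> (2 <= n2)%N -> (2 <= n3)%N -> (1 <= r)%N ->
  0 < b -> 3 <= beta ->
  (forall i j k, 0 <= A i j k <= 1) ->
  (forall i j k, 0 <= B i j k <= b) ->
  (forall i j k, closest_level (vartheta n1 n2 beta) 1 (A i j k) (At i j k)) ->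
  (forall i j k, if B i j k == 0 then Bt i j k = 0
                 else closest_level (vartheta n1 n2 beta) b (B i j k) (Bt i j k)) ->
  tnorm_inf (tsub (tprod At Bt) (tprod A B))
    <= 3 * r%:R * n3%:R * b / (vartheta n1 n2 beta)%:R.
Proof.
move=> h1 h2 h3 hr hb hbeta hA hB hAt hBt.
set th := vartheta n1 n2 beta.
have hth4 : (4 <= th)%N := @th_ge R n1 n2 beta h1 hbeta.
have hth : (2 <= th)%N by apply: leq_trans hth4.
set N := th.-1.
have hNR : 0 < N%:R :> R by rewrite ltr0n /N -ltnS prednK // (leq_trans _ hth).
have hthN : th%:R = N%:R + 1 :> R by rewrite natr1 /N prednK // (leq_trans _ hth).
have hN3 : 3 <= N%:R :> R by rewrite (ler_nat R 3 N) /N -ltnS prednK // (leq_trans _ hth).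
have term : forall i l kk j q,
    `|At i l kk * Bt l j q - A i l kk * B l j q| <= 2 * b / N%:R.
  move=> i l kk j q.
  have eA : `|At i l kk - A i l kk| <= 1 / N%:R by apply: closest_bound => //; exact: hA.
  have hBt0 : 0 <= Bt l j q <= b /\ `|Bt l j q - B l j q| <= b / N%:R.
    have := hBt l j q; case: eqP => [-> ->|_ hc].
      by rewrite subrr normr0 lexx ltW // divr_ge0 // ltW.
    split; first by case: hc => [hl _]; apply: level_bounds hl => //; exact: ltW.
    by apply: closest_bound hc => //; exact: hB.
  case: hBt0 => /andP[hb0 hb1] eB.
  have /andP[ha0 ha1] := hA i l kk.
  have -> : At i l kk * Bt l j q - A i l kk * B l j q =
    (At i l kk - A i l kk) * Bt l j q + A i l kk * (Bt l j q - B l j q) by ring.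
  apply: le_trans (ler_normD _ _) _.
  rewrite !normrM (ger0_norm hb0) (ger0_norm ha0).
  have -> : 2 * b / N%:R = 1 / N%:R * b + 1 * (b / N%:R) by field; rewrite gt_eqF.
  apply: lerD; apply: ler_pM => //; exact: normr_ge0.
have bnd0 : 0 <= 3 * r%:R * n3%:R * b / th%:R.
  by rewrite !mulr_ge0 ?invr_ge0 ?ler0n ?ltW.
rewrite /tnorm_inf.
apply: bigmax_le => // i _; apply: bigmax_le => // j _; apply: bigmax_le => // k _.
rewrite /tsub /tprod -sumrB.
under eq_bigr => q _ do rewrite -sumrB.
apply: (@le_trans _ _ (\sum_(q < n3) `|\sum_(l < r) (At i l (subord k q) * Bt l j q - A i l (subord k q) * B l j q)|)).
  exact: ler_norm_sum.
apply: (@le_trans _ _ (\sum_(q < n3) \sum_(l < r) (2 * b / N%:R))).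
  apply: ler_sum => q _.
  apply: (@le_trans _ _ (\sum_(l < r) `|At i l (subord k q) * Bt l j q - A i l (subord k q) * B l j q|)).
    exact: ler_norm_sum.
  by apply: ler_sum => l _; apply: term.
rewrite !sumr_const !card_ord -[_ *+ r]mulr_natr -[_ *+ n3]mulr_natr hthN.
have key : 2 / N%:R <= 3 / (N%:R + 1) :> R.
  rewrite ler_pdivrMr // mulrAC ler_pdivlMr; last lra.
  lra.
have s0 : 0 <= r%:R * n3%:R * b :> R by rewrite !mulr_ge0 ?ler0n ?ltW.
have E1 : 2 * b / N%:R * r%:R * n3%:R = (r%:R * n3%:R * b) * (2 / N%:R) :> R by ring.
have E2 : 3 * r%:R * n3%:R * b / (N%:R + 1) = (r%:R * n3%:R * b) * (3 / (N%:R + 1)) :> R by ring.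
by rewrite E1 E2 ler_wpM2l.
Qed.
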